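(* Let $r\geq 2$ be an integer, and let $x_i$ ($1\le i\le r$) and $y_{i,j}$ ($1\le i\le j\le r$) be formal variables. Define \[ L(x,y)=\sum_{T\in\mathcal{U}_r}\prod_{v=2}^r\Big(x_{f_T(v)}\sum_{u\in \mathfrak{h}_T(v)} y_{v,u}\Big),\qquad R(x,y)=x_1\,y_{r,r}\prod_{i=2}^{r-1}\Bigg(\sum_{j=1}^{i} x_j\,y_{i,i}+\sum_{j=i+1}^{r} x_i\,y_{i,j}\Bigg). \] Then \[ \text{(a)}\quad y_{1,1}\,L(x,y)=\sum_{\pi\in\Pi_1(\{1,\dots,r\})} D(\pi)\sum_{T\in\mathcal{E}(\pi)}\kappa(T), \] \[ \text{(b)}\quad y_{1,1}\,R(x,y)=\sum_{\pi\in\Pi_1(\{1,\dots,r\})} D(\pi)\sum_{c\in\mathcal{C}(\pi)}\omega(c,\pi). \]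
   Context: Rooted trees have edges oriented towards the root; the head of an edge is the father of its tail (son); $f_T(v)$ is the father of a non-root vertex $v$. Descendants of a vertex are its sons and recursively their descendants; $u$ is a descendant of $v$ iff $v$ is an ancestor of $u$. An unordered increasing tree on a finite set $\mathcal{S}$ of positive integers is a rooted tree with vertex-set $\mathcal{S}$, sons unordered, such that every son has a larger label than its father. $\mathcal{U}_r$ is the set of unordered increasing trees on $\{1,\dots,r\}$. The hook $\mathfrak{h}_T(v)$ is $v$ together with its descendants. For an unordered increasing tree $T$, $\sigma_i(T)$ is the number of sons of $i$ and $\kappa(T)=\prod_{i\in V(T)}x_i^{\sigma_i(T)}$. $\Pi_1(\{1,\dots,r\})$ is the set of set partitions $\pi$ of $\{1,\dots,r\}$ having $\{1\}$ as a block. If $\pi$ has $k$ blocks, they are indexed $\pi_1,\dots,\pi_k$ so that their maxima $\mu_i=\max\pi_i$ satisfy $\mu_1<\dots<\mu_k$ (so $\pi_1=\{1\}$, $\mu_1=1$, $\mu_k=r$). A function $g:\mathcal{S}\to\mathcal{S}$ is dominating if $g(i)\ge i$ for all $i$; its weight is $\mathrm{wt}_g=\prod_{i\in\mathcal{S}}y_{i,g(i)}$. Its induced partition is the partition of $\mathcal{S}$ into the vertex-sets of the connected components (ignoring orientation) of the digraph with edges $(i,g(i))$. $\mathcal{D}(\pi)$ is the set of dominating functions on $\{1,\dots,r\}$ with induced partition $\pi$, and $D(\pi)=\sum_{g\in\mathcal{D}(\pi)}\mathrm{wt}_g$. $\mathcal{E}(\pi)$ is the set of unordered increasing trees on $\{1,\dots,r\}$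 such that for every two elements $i<j$ in the same block of $\pi$, $i$ is an ancestor of $j$. $\mathcal{C}(\pi)=\{(c_2,\dots,c_{k-1}):1\le c_i\le\mu_i\}$ (containing only the empty list if $k=2$), and for $c\in\mathcal{C}(\pi)$, \[ \omega(c,\pi)=\frac{x_{c_2}\cdots x_{c_{k-1}}}{x_{\mu_2}\cdots x_{\mu_k}}\prod_{i=1}^r x_i. \] *)

(* Defs.v *)
From HB Require Import structures.
From mathcomp Require Import all_boot all_order all_algebra.
Set Implicit Arguments. Unset Strict Implicit. Unset Printing Implicit Defensive.
Import Order.TTheory GRing.Theory Num.Theory.

(* Conventions: the vertex/label set {1,...,r} is represented by 'I_r,
   the ordinal i : 'I_r standing for the label i.+1.  Variables are
   x : nat -> R (x_i = x i) and y : nat -> nat -> R (y_{i,j} = y i j),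
   always applied to labels (i.e. to i.+1 for i : 'I_r). *)

(* Unordered increasing trees on {1..r}: a tree is encoded by its father
   function f (with f v < v for every non-root v; the root, necessarily the
   label 1 = index 0, is sent to itself as a dummy value). *)
Definition utrees (r : nat) : {set {ffun 'I_r -> 'I_r}} :=
  [set f : {ffun 'I_r -> 'I_r} |
     [forall v : 'I_r, if val v == 0%N then val (f v) == 0%N else (f v < v)%N]].

Definition anc (r : nat) (f : {ffun 'I_r -> 'I_r}) (u v : 'I_r) : bool :=
  (u != v) && [exists k : 'I_r, iter k.+1 (fun w => f w) v == u].

Definition hook (r : nat) (f : {ffun 'I_r -> 'I_r}) (v : 'I_r) : {set 'I_r} :=
  [set u | (u == v) || anc f v u].

Definition nsons (r : nat) (f : {ffun 'I_r -> 'I_r}) (i : 'I_r) : nat :=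
  #|[set v : 'I_r | (0 < val v)%N && (f v == i)]|.

Section Poly.
Local Open Scope ring_scope.
Variable R : fieldType.

Definition kappa (x : nat -> R) (r : nat) (f : {ffun 'I_r -> 'I_r}) : R :=
  \prod_(i : 'I_r) x i.+1 ^+ nsons f i.

Definition Lxy (x : nat -> R) (y : nat -> nat -> R) (r : nat) : R :=
  \sum_(f in utrees r)
     \prod_(v : 'I_r | (0 < val v)%N)
        (x (f v).+1 * \sum_(u in hook f v) y v.+1 u.+1).

Definition Rxy (x : nat -> R) (y : nat -> nat -> R) (r : nat) : R :=
  x 1%N * y r r *
  \prod_(2 <= i < r)
     (\sum_(1 <= j < i.+1) x j * y i i + \sum_(i.+1 <= j < r.+1) x i * y i j).
End Poly.

Definition Pi1 (r : nat) : {set {set {set 'I_r}}} :=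
  [set P : {set {set 'I_r}} |
     partition P [set: 'I_r] && ([set i : 'I_r | val i == 0%N] \in P)].

Definition dominating (r : nat) : {set {ffun 'I_r -> 'I_r}} :=
  [set g : {ffun 'I_r -> 'I_r} | [forall i : 'I_r, (val i <= val (g i))%N]].

Definition grel (r : nat) (g : {ffun 'I_r -> 'I_r}) : rel 'I_r :=
  fun a b => (g a == b) || (g b == a).

Definition induced_partition (r : nat) (g : {ffun 'I_r -> 'I_r})
  : {set {set 'I_r}} :=
  [set [set j | connect (grel g) i j] | i : 'I_r].

Definition bmax (r : nat) (B : {set 'I_r}) : nat := \max_(i in B) i.+1.

Definition Eset (r : nat) (P : {set {set 'I_r}}) : {set {ffun 'I_r -> 'I_r}} :=
  [set f in utrees r |
     [forall B in P, forall i in B, forall j in B, (val i < val j)%N ==> anc f i j]].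

(* C(pi): c_i is attached to the block pi_i (2 <= i <= k-1), i.e. to the
   blocks other than pi_1 = {1} (max 1) and pi_k (max r); the value c B
   stands for the label (c B).+1; unused entries are normalized to 0. *)
Definition middle (r : nat) (P : {set {set 'I_r}}) (B : {set 'I_r}) : bool :=
  [&& B \in P, bmax B != 1%N & bmax B != r].

Definition Cset (r : nat) (P : {set {set 'I_r}})
  : {set {ffun {set 'I_r} -> 'I_r}} :=
  [set c : {ffun {set 'I_r} -> 'I_r} |
     [forall B : {set 'I_r},
        if middle P B then ((c B).+1 <= bmax B)%N else val (c B) == 0%N]].

Section Poly2.
Local Open Scope ring_scope.
Variable R : fieldType.

Definition Dw (y : nat -> nat -> R) (r : nat) (P : {set {set 'I_r}}) : R :=
  \sum_(g in dominating r | induced_partition g == P)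
     \prod_(i : 'I_r) y i.+1 (g i).+1.

Definition omega (x : nat -> R) (r : nat) (c : {ffun {set 'I_r} -> 'I_r})
  (P : {set {set 'I_r}}) : R :=
  (\prod_(B : {set 'I_r} | middle P B) x (c B).+1)
  / (\prod_(B in P | bmax B != 1%N) x (bmax B))
  * \prod_(i : 'I_r) x i.+1.
End Poly2.

(* Main.v *)
Require Import Defs.
From HB Require Import structures.
From mathcomp Require Import all_boot all_order all_algebra.
From mathcomp Require Import ring.

Module M_A.
Set Implicit Arguments. Unset Strict Implicit. Unset Printing Implicit Defensive.
Import GRing.Theory.

Section Dom.
Variable r : nat.
Implicit Types (g f : {ffun 'I_r -> 'I_r}) (i j : 'I_r).

Definition groot g i := iter r g i.

Lemma domP g : g \in dominating r -> forall i, (val i <= val (g i))%N.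
Proof. by rewrite inE => /forallP. Qed.

Lemma iter_fix g i k : g i = i -> iter k g i = i.
Proof. by move=> H; elim: k => //= k ->. Qed.

Lemma groot_fix g i : g \in dominating r -> g (groot g i) = groot g i.
Proof.
move=> gd; have [//|H] := eqVneq (g (groot g i)) (groot g i); exfalso.
have key : forall k, (k <= r)%N -> (k <= val (iter k g i))%N.
  elim=> // k IH kr.
  have := IH (ltnW kr) => lek.
  have ne : g (iter k g i) != iter k g i.
    apply/negP => /eqP E; move: H; rewrite /groot.
    rewrite (_ : iter r = iter (r - k + k)); last by rewrite subnK // ltnW.
    by rewrite iterD iter_fix // E eqxx.
  rewrite iterS; have := domP gd (iter k g i).
  rewrite leq_eqVlt => /orP[/eqP E|lt]; last exact: leq_ltn_trans lek lt.
  by move: ne; rewrite -(inj_eq val_inj) -E eqxx.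
by have := key r (leqnn r); rewrite leqNgt ltn_ord.
Qed.

Lemma groot_g g a : g \in dominating r -> groot g (g a) = groot g a.
Proof. by move=> gd; rewrite /groot -iterSr iterS groot_fix. Qed.

Lemma le_iter g i k : g \in dominating r -> (val i <= val (iter k g i))%N.
Proof.
move=> gd; elim: k => //= k IH; exact: leq_trans IH (domP gd _).
Qed.

Lemma le_groot g i : g \in dominating r -> (val i <= val (groot g i))%N.
Proof. exact: le_iter. Qed.

Lemma groot_root g i : g \in dominating r -> groot g (groot g i) = groot g i.
Proof. by move=> gd; rewrite {1}/groot iter_fix // groot_fix. Qed.

Lemma grel_sym g : symmetric (Defs.grel g).
Proof. by move=> a b; rewrite /Defs.grel orbC. Qed.

Lemma connect_root g i j : g \in dominating r ->
  connect (Defs.grel g) i j = (groot g i == groot g j).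
Proof.
move=> gd; apply/idP/eqP.
  move/connectP=> [p pth ->]; elim: p i pth => [|b p IH] i //=.
  move=> /andP[e /IH <-]; case/orP: e => /eqP E.
    by rewrite -E groot_g.
  by rewrite -E groot_g.
have H : forall a k, connect (Defs.grel g) a (iter k g a).
  move=> a; elim=> [|k IH]; first exact: connect0.
  apply: connect_trans IH _; apply: connect1; by rewrite iterS /Defs.grel eqxx.
move=> E; apply: connect_trans (H i r) _.
rewrite (sym_connect_sym (@grel_sym g)); rewrite -/(groot g i) E; exact: H.
Qed.

Definition cls g i : {set 'I_r} := [set j | groot g i == groot g j].

Lemma ip_eq g : g \in dominating r ->
  induced_partition g = [set cls g i | i : 'I_r].
Proof.
move=> gd; apply/setP=> B; apply/imsetP/imsetP => -[i _ ->]; exists i => //;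
  by apply/setP=> j; rewrite !inE connect_root.
Qed.

Lemma Pi1_dom g : (0 < r)%N -> g \in dominating r ->
  (induced_partition g \in Pi1 r) = [forall i, (val i == 0%N) ==> (val (g i) == 0%N)].
Proof.
move=> r0 gd; rewrite inE ip_eq //.
have -> : partition [set cls g i | i : 'I_r] [set: 'I_r].
  have -> : [set cls g i | i : 'I_r] =
     equivalence_partition (fun i j => groot g i == groot g j) [set: 'I_r].
    by apply/setP=> B; apply/imsetP/imsetP => -[i _ ->]; exists i => //;
      apply/setP => j; rewrite !inE.
  apply: equivalence_partitionP => a b c _ _ _ /=; split; first exact: eqxx.
  by move/eqP ->.
rewrite /=; apply/imsetP/forallP.
  move=> [k _ E] i; apply/implyP => i0.
  have ik : i \in cls g k by rewrite -E inE.
  have : g i \in cls g k by move: ik; rewrite !inE groot_g.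
  by rewrite -E inE.
move=> H; pose i0 := Ordinal r0; exists i0 => //.
have gi0 : g i0 = i0 by apply: val_inj; apply/eqP; have := H i0; rewrite eqxx.
have ri0 : groot g i0 = i0 by rewrite /groot iter_fix.
apply/setP=> j; rewrite !inE ri0; apply/idP/eqP.
  move=> j0; have -> : j = i0 by apply: ord_inj; rewrite /= (eqP j0).
  by rewrite ri0.
move=> rj; have := le_groot j gd; rewrite -rj /= leqn0.
by [].
Qed.
End Dom.

End M_A.
Import M_A.

Module M_B.
Set Implicit Arguments. Unset Strict Implicit. Unset Printing Implicit Defensive.
Import GRing.Theory.
Local Open Scope ring_scope.

Definition Qd r (i j : 'I_r) : bool :=
  ((val i <= val j)%N && ((val i == 0%N) ==> (val j == 0%N))).

Lemma famQ r (g : {ffun 'I_r -> 'I_r}) : (g \in family (@Qd r)) =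
  (g \in dominating r) && [forall i : 'I_r, (val i == 0%N) ==> (val (g i) == 0%N)].
Proof.
apply/familyP/andP.
  move=> H; split; [rewrite inE|]; apply/forallP => i; have := H i;
    rewrite unfold_in; by case/andP.
rewrite inE; case=> /forallP H1 /forallP H2 i; rewrite unfold_in; exact/andP.
Qed.

Lemma RED (R : fieldType) r (r0 : (0 < r)%N) (y : nat -> nat -> R)
  (G : {set {set 'I_r}} -> R) :
  \sum_(P in Pi1 r) Dw y P * G P =
  \sum_(g in family (@Qd r)) (\prod_(i : 'I_r) y i.+1 (g i).+1) * G (induced_partition g).
Proof.
rewrite (eq_bigl (fun g => (g \in dominating r) && (induced_partition g \in Pi1 r))); last first.
  move=> g; rewrite famQ; case gd: (g \in dominating r) => //=; by rewrite Pi1_dom.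
rewrite (partition_big (@induced_partition r) (fun P => P \in Pi1 r)) /=; last by move=> g /andP[].
apply: eq_bigr => P PP; rewrite /Dw big_distrl /=; apply: eq_big => g.
  by case: (induced_partition g =P P) => [->|]; rewrite ?PP ?andbT ?andbF.
by move=> /andP[_ /eqP ->].
Qed.

End M_B.
Import M_B.

Module M_C.
Set Implicit Arguments. Unset Strict Implicit. Unset Printing Implicit Defensive.
Import GRing.Theory.

Section Tree.
Variable r : nat.
Variable f : {ffun 'I_r -> 'I_r}.
Hypothesis fu : f \in utrees r.
Implicit Types (u v w : 'I_r).

Lemma utP v : if val v == 0%N then val (f v) == 0%N else (f v < v)%N.
Proof. by move: fu; rewrite inE => /forallP. Qed.

Lemma f_le v : (val (f v) <= val v)%N.
Proof. by have := utP v; case: ifP => [/eqP -> /eqP ->|_ /ltnW]. Qed.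

Lemma iter_le k v : (val (iter k f v) <= val v)%N.
Proof. elim: k => //= k IH; exact: leq_trans (f_le _) IH. Qed.

Lemma iter_big k v : (val (iter k f v) == 0%N) || (val (iter k f v) + k <= val v)%N.
Proof.
elim: k => [|k IH] /=; first by rewrite addn0 leqnn orbT.
have := utP (iter k f v); case: ifP => [_ -> //|nz lt]; apply/orP; right.
move: IH; rewrite nz /= => IH; rewrite addnS; apply: leq_trans IH; by rewrite -addSn leq_add2r.
Qed.

Lemma iter_zero k v : (r <= k)%N -> val (iter k f v) == 0%N.
Proof.
move=> rk; have := iter_big k v; case/orP => // H; exfalso.
have := leq_trans (leq_addl _ _) H; rewrite leqNgt => /negP; apply.
exact: leq_trans (ltn_ord v) rk.
Qed.

Definition le_t u v := (v == u) || anc f u v.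

Lemma ancP u v : reflect (u != v /\ exists k, iter k.+1 f v = u) (anc f u v).
Proof.
rewrite /anc; apply: (iffP andP) => [[ne /existsP[k /eqP E]]|[ne [k E]]]; split => //.
  by exists k.
apply/existsP; case: (ltnP k r) => kr; first by exists (Ordinal kr); rewrite E.
have rr : (r.-1 < r)%N by rewrite ltn_predL (leq_ltn_trans (leq0n _) (ltn_ord v)).
exists (Ordinal rr); rewrite -E; apply/eqP; apply: val_inj => /=.
rewrite (eqP (iter_zero v (leqW kr))).
change (val (iter r.-1.+1 f v) = 0%N).
rewrite prednK ?(leq_ltn_trans (leq0n _) (ltn_ord v)) //; exact/eqP/iter_zero.
Qed.

Lemma le_tP u v : reflect (exists k, iter k f v = u) (le_t u v).
Proof.
apply: (iffP orP) => [[/eqP->|/ancP[_ [k E]]]|[k E]]; [by exists 0%N | by exists k.+1 | ].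
case: k E => [/= ->|k E]; first by left.
have [->|ne] := eqVneq v u; first by left.
by right; apply/ancP; split; [rewrite eq_sym|exists k].
Qed.

Lemma le_t_le u v : le_t u v -> (val u <= val v)%N.
Proof. by case/le_tP => k <-; exact: iter_le. Qed.

Lemma le_t_refl u : le_t u u.
Proof. by rewrite /le_t eqxx. Qed.

Lemma le_t_trans u v w : le_t u v -> le_t v w -> le_t u w.
Proof.
case/le_tP=> k1 <- /le_tP [k2 <-]; apply/le_tP; exists (k1 + k2)%N; by rewrite iterD.
Qed.

Lemma chain a b m : le_t a m -> le_t b m -> le_t a b || le_t b a.
Proof.
case/le_tP => ka <- /le_tP [kb <-]; case: (leqP ka kb) => h.
  apply/orP; right; apply/le_tP; exists (kb - ka)%N; by rewrite -iterD subnK.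
apply/orP; left; apply/le_tP; exists (ka - kb)%N; by rewrite -iterD subnK // ltnW.
Qed.

Lemma anc_le u v : anc f u v -> le_t u v.
Proof. by move=> H; rewrite /le_t H orbT. Qed.

Lemma hookE u v : (u \in hook f v) = le_t v u.
Proof. by rewrite inE. Qed.

Definition Qf (v u : 'I_r) : bool :=
  if val v == 0%N then val u == 0%N else u \in hook f v.

Lemma keyA g : (g \in family Qf) =
  (g \in family (@Qd r)) && (f \in Eset (induced_partition g)).
Proof.
apply/idP/andP.
  move/familyP => H.
  have Hle : forall a, le_t a (g a).
    move=> a; have := H a; rewrite unfold_in /Qf hookE.
    case: ifP => [a0 ga0|_ //]; apply/orP; left; apply/eqP; apply: ord_inj.
    by rewrite (eqP a0) (eqP ga0).
  have gd : g \in dominating r by rewrite inE; apply/forallP => a; exact: le_t_le.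
  split.
    rewrite famQ gd /=; apply/forallP => i; apply/implyP => i0.
    by have := H i; rewrite unfold_in /Qf i0.
  have Hr : forall a n, le_t a (iter n g a).
    move=> a; elim=> [|n IH]; first exact: le_t_refl.
    by rewrite iterS; apply: le_t_trans IH (Hle _).
  rewrite inE fu /=; apply/forallP => B; apply/implyP; rewrite ip_eq //.
  move=> /imsetP [k _ ->].
  apply/forallP => i; apply/implyP; rewrite inE => /eqP ki.
  apply/forallP => j; apply/implyP; rewrite inE => /eqP kj.
  apply/implyP => ij.
  have hi : le_t i (groot g k) by rewrite ki; exact: Hr.
  have hj : le_t j (groot g k) by rewrite kj; exact: Hr.
  case/orP: (chain hi hj) => h.
    case/orP: h => [/eqP E|//]; by rewrite E ltnn in ij.
  by have := le_t_le h; rewrite leqNgt ij.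
move=> [gQ fE]; move: (gQ); rewrite famQ => /andP[gd /forallP H0].
move: fE; rewrite inE => /andP[_ /forallP HE].
apply/familyP => v; rewrite unfold_in /Qf; case: ifP => v0.
  by have := H0 v; rewrite v0.
rewrite inE; have [->|ne] := eqVneq (g v) v; first by [].
have vB : [set j | connect (Defs.grel g) v j] \in induced_partition g.
  by apply/imsetP; exists v.
have := implyP (HE _) vB => /forallP /(_ v) /implyP; rewrite inE connect0 => /(_ isT).
move=> /forallP /(_ (g v)) /implyP.
rewrite inE connect1 ?/Defs.grel ?eqxx // => /(_ isT) /implyP.
rewrite ltn_neqAle domP // andbT.
have -> : (val v != val (g v)) by rewrite (inj_eq val_inj) eq_sym.
by move=> /(_ isT) ->; rewrite orbT.
Qed.
End Tree.

End M_C.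
Import M_C.

Module M_D.
Set Implicit Arguments. Unset Strict Implicit. Unset Printing Implicit Defensive.
Import GRing.Theory.
Local Open Scope ring_scope.

Lemma kappaE (R : fieldType) (x : nat -> R) r (f : {ffun 'I_r -> 'I_r}) :
  \prod_(v : 'I_r | (0 < val v)%N) x (f v).+1 = kappa x f.
Proof.
rewrite (partition_big (fun v => f v) xpredT) //=; rewrite /kappa.
apply: eq_bigr => i _; rewrite /nsons -prodr_const.
apply: eq_big => [v|v /andP[_ /eqP ->]] //; by rewrite inE.
Qed.

Lemma LHS_a (R : fieldType) (x : nat -> R) y r (r0 : (0 < r)%N) :
  y 1%N 1%N * Lxy x y r =
  \sum_(f in utrees r) kappa x f * \sum_(g in family (Qf f)) \prod_(i : 'I_r) y i.+1 (g i).+1.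
Proof.
rewrite /Lxy big_distrr; apply: eq_bigr => f _ /=.
rewrite big_split /= kappaE mulrCA; congr (_ * _).
transitivity (\prod_(v : 'I_r) \sum_(u | Qf f v u) y v.+1 u.+1); last exact: bigA_distr_big_dep.
pose i0 := Ordinal r0.
rewrite [RHS](bigD1 i0) //=; congr (_ * _).
  rewrite /Qf /= (big_pred1 i0) // => j; rewrite /= -(inj_eq val_inj) //.
apply: eq_big => v.
  by rewrite -(inj_eq val_inj) /= lt0n.
move=> v0; apply: eq_bigl => u; rewrite /Qf; by rewrite eqn0Ngt v0.
Qed.

Lemma part_a (R : fieldType) (x : nat -> R) y r (r0 : (0 < r)%N) :
  y 1%N 1%N * Lxy x y r =
     \sum_(P in Pi1 r) Dw y P * \sum_(f in Eset P) kappa x f.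
Proof.
rewrite LHS_a // (RED r0 y (fun P => \sum_(f in Eset P) kappa x f)).
rewrite (eq_bigr (fun f => \sum_(g | (g \in family (@Qd r)) && (f \in Eset (induced_partition g)))
   kappa x f * \prod_(i : 'I_r) y i.+1 (g i).+1)); last first.
  move=> f fu; rewrite big_distrr; apply: eq_bigl => g; exact: keyA fu g.
rewrite (exchange_big_dep (fun g => g \in family (@Qd r))) /=; last by move=> f g _ /andP[].
apply: eq_bigr => g gQ; rewrite big_distrr /=; apply: eq_big => f.
  rewrite gQ /=; case fE: (f \in Eset (induced_partition g)); rewrite ?andbT ?andbF //.
  by move: fE; rewrite inE => /andP[].
by move=> _; rewrite mulrC.
Qed.

End M_D.
Import M_D.

Module M_E.
Set Implicit Arguments. Unset Strict Implicit. Unset Printing Implicit Defensive.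
Import GRing.Theory.
Local Open Scope ring_scope.

Section PartB.
Variable R : fieldType.
Variable x : nat -> R.

Definition Ssum r (m : nat) : R := \sum_(j : 'I_r | (j.+1 <= m)%N) x j.+1.

Lemma omega_sum r (r0 : (0 < r)%N) (P : {set {set 'I_r}}) :
  \sum_(c in Cset P) omega x c P =
  (\prod_(B | middle P B) Ssum r (bmax B)) /
  (\prod_(B in P | bmax B != 1%N) x (bmax B)) * \prod_(i : 'I_r) x i.+1.
Proof.
rewrite /omega -big_distrl -big_distrl /=; congr (_ * _ * _).
pose i0 := Ordinal r0.
symmetry; transitivity (\prod_(B : {set 'I_r})
   \sum_(j : 'I_r | if middle P B then (j.+1 <= bmax B)%N else val j == 0%N)
     (if middle P B then x j.+1 else 1)).
  rewrite big_mkcond; apply: eq_bigr => B _; case: ifP => _ //.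
  rewrite (big_pred1 i0) // => j; by rewrite /= -(inj_eq val_inj).
rewrite bigA_distr_big_dep; apply: eq_big => c.
  rewrite [RHS]inE; apply/familyP/forallP => H B; move: (H B); by rewrite unfold_in.
move=> _; rewrite [RHS]big_mkcond; apply: eq_bigr => B _; by case: ifP.
Qed.

Lemma bmax_cls r (g : {ffun 'I_r -> 'I_r}) i : g \in dominating r -> g i = i ->
  bmax (cls g i) = i.+1.
Proof.
move=> gd gi; have ri : groot g i = i by rewrite /groot iter_fix.
apply/eqP; rewrite eqn_leq; apply/andP; split.
  apply/bigmax_leqP => j; rewrite inE ri => /eqP ij.
  by rewrite ltnS ij le_groot.
by apply: (@leq_bigmax_cond _ _ (fun j : 'I_r => j.+1) i); rewrite inE.
Qed.

Lemma BLK r (g : {ffun 'I_r -> 'I_r}) (F : nat -> R) (C : pred nat) :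
  g \in dominating r ->
  \prod_(B in induced_partition g | C (bmax B)) F (bmax B) =
  \prod_(i : 'I_r | (g i == i) && C i.+1) F i.+1.
Proof.
move=> gd.
have E : induced_partition g = (cls g) @: [set i | g i == i].
  apply/setP => B; rewrite ip_eq //; apply/imsetP/imsetP => -[k kin ->].
    exists (groot g k); first by rewrite inE groot_fix.
    by apply/setP => j; rewrite !inE groot_root.
  by exists k.
rewrite big_mkcondr E big_imset /=; last first.
  move=> i j; rewrite !inE => /eqP gi /eqP gj E'.
  have : j \in cls g i by rewrite E' inE eqxx.
  by rewrite inE /groot !iter_fix // => /eqP.
rewrite [RHS]big_mkcondr; apply: eq_big => [i|i]; first by rewrite inE.
by rewrite inE => /eqP gi; rewrite bmax_cls.
Qed.

Definition hh r (i j : 'I_r) : R :=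
  if val i == 0%N then x 1%N
  else if j == i then (if (i.+1 != r)%N then Ssum r i.+1 else 1) else x i.+1.

End PartB.

End M_E.
Import M_E.

Module M_F.
Set Implicit Arguments. Unset Strict Implicit. Unset Printing Implicit Defensive.
Import GRing.Theory.
Local Open Scope ring_scope.

Lemma omega_g (R : fieldType) (x : nat -> R) r (r0 : (0 < r)%N)
  (hx : forall i : nat, (1 <= i <= r)%N -> x i != 0)
  (g : {ffun 'I_r -> 'I_r}) : g \in dominating r ->
  \sum_(c in Cset (induced_partition g)) omega x c (induced_partition g) =
  \prod_(i : 'I_r) hh x i (g i).
Proof.
move=> gd; rewrite omega_sum //.
rewrite /middle (@BLK R r g (Ssum x r) (fun m => (m != 1%N) && (m != r)) gd).
rewrite (@BLK R r g x (fun m => m != 1%N) gd) /=.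
rewrite [X in _ * X](bigID (fun i : 'I_r => (g i == i) && (i.+1 != 1%N))) /=.
rewrite -mulrA mulKf; last first.
  apply/prodf_neq0 => i _; apply: hx; by rewrite /= ltn_ord.
rewrite [RHS](bigID (fun i : 'I_r => (g i == i) && (i.+1 != 1%N))) /=.
congr (_ * _).
  rewrite (eq_bigl (fun i : 'I_r => ((g i == i) && (i.+1 != 1%N)) && (i.+1 != r)));
    last by move=> i; rewrite andbA.
  rewrite big_mkcondr; apply: eq_bigr => i /andP[/eqP gi i1].
  rewrite /hh gi eqxx.
  have -> : (val i == 0%N) = false by move: i1; rewrite eqSS => /negbTE.
  by [].
apply: eq_bigr => i; rewrite negb_and negbK => /orP[/negbTE gi|i0].
  by rewrite /hh gi; case: ifP => // /eqP ->.
move: i0; rewrite eqSS => /eqP i0; rewrite /hh i0.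
by have -> : (val i == 0%N) by apply/eqP.
Qed.

End M_F.
Import M_F.

Module M_G.
Set Implicit Arguments. Unset Strict Implicit. Unset Printing Implicit Defensive.
Import GRing.Theory.
Local Open Scope ring_scope.

Lemma midE (R : fieldType) (x : nat -> R) y n (k : 'I_(n.+2)) i :
  val k = i.+1 -> (i < n)%N ->
  \sum_(j | Qd k j) y k.+1 j.+1 * hh x k j =
  \sum_(1 <= j < i.+3) x j * y i.+2 i.+2 + \sum_(i.+3 <= j < n.+3) x i.+2 * y i.+2 j.
Proof.
move=> kv ilt; case: k kv => kk hk /= kv; subst kk.
rewrite (bigD1 (Ordinal hk)) /=; last by rewrite /Qd leqnn.
congr (_ + _).
  rewrite /hh eqxx /= -big_distrl /= mulrC; congr (_ * _).
  have -> : (i.+2 != n.+2)%N by rewrite eqSS eqSS neq_ltn ilt.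
  rewrite /Ssum big_add1 /= big_mkord [RHS](big_ord_widen n.+2 (fun j => x j.+1)) //.
rewrite big_add1 /= big_geq_mkord; apply: eq_big => j.
  rewrite /Qd /= andbT -(inj_eq val_inj) /=.
  by rewrite [in RHS]ltn_neqAle andbC eq_sym.
by move=> /andP[_ jk]; rewrite /hh /= (negbTE jk) mulrC.
Qed.

Lemma factR (R : fieldType) (x : nat -> R) y n :
  \prod_(i : 'I_(n.+2)) \sum_(j | Qd i j) y i.+1 j.+1 * hh x i j = y 1%N 1%N * Rxy x y n.+2.
Proof.
rewrite big_ord_recl big_ord_recr /=.
rewrite (big_pred1 ord0); last by move=> j; rewrite /Qd /= -(inj_eq val_inj).
rewrite (big_pred1 ord_max); last first.
  move=> j; rewrite /Qd /= -(inj_eq val_inj) /= andbT.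
  rewrite /bump leq0n add1n; apply/idP/eqP => [h|->//]; apply/eqP; by rewrite eqn_leq h andbT -ltnS ltn_ord.
rewrite /Rxy big_add1 /= big_add1 /= big_mkord.
rewrite (eq_bigr (fun i : 'I_n => \sum_(1 <= j < i.+3) x j * y i.+2 i.+2 +
   \sum_(i.+3 <= j < n.+3) x i.+2 * y i.+2 j)); last first.
  move=> i _; apply: midE => //.
have hL : hh x (lift ord0 (@ord_max n)) ord_max = 1.
  rewrite /hh.
  have -> : (val (lift ord0 (@ord_max n)) == 0%N) = false by rewrite /= /bump leq0n add1n.
  have -> : ((@ord_max n.+1) == lift ord0 (@ord_max n)) by
    rewrite -(inj_eq val_inj) /= /bump leq0n add1n.
  by rewrite /= /bump leq0n add1n eqxx.
rewrite hL /bump leq0n add1n /hh /=.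
ring.
Qed.

End M_G.
Import M_G.

Import GRing.Theory.
Local Open Scope ring_scope.

Theorem proposition2p1 (R : fieldType) (r : nat) (hr : (2 <= r)%N)
  (x : nat -> R) (y : nat -> nat -> R)
  (hx : forall i : nat, (1 <= i <= r)%N -> x i != 0) :
  (y 1%N 1%N * Lxy x y r =
     \sum_(P in Pi1 r) Dw y P * \sum_(f in Eset P) kappa x f)
  /\
  (y 1%N 1%N * Rxy x y r =
     \sum_(P in Pi1 r) Dw y P * \sum_(c in Cset P) omega x c P).
Proof.
have r0 : (0 < r)%N by apply: leq_trans hr.
split; first exact: part_a.
rewrite (RED r0 y (fun P => \sum_(c in Cset P) omega x c P)).
rewrite (eq_bigr (fun g : {ffun 'I_r -> 'I_r} => \prod_(i : 'I_r) (y i.+1 (g i).+1 * hh x i (g i)))); last first.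
  move=> g gQ; rewrite omega_g //; last by move: gQ; rewrite famQ => /andP[].
  by rewrite big_split.
transitivity (\prod_(i : 'I_r) \sum_(j | Qd i j) y i.+1 j.+1 * hh x i j); last first.
  exact: bigA_distr_big_dep.
case: r hr {r0 hx} => [|[|n]] // _; by rewrite factR.
Qed.
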